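(* (1) For every plane poset $P$, $\Delta_0(P)=\sum_{P_1P_2=P}P_1\otimes P_2$, the sum running over pairs of plane posets $(P_1,P_2)$ (possibly empty) with $P_1P_2=P$. (2) For any plane posets $P,Q$, $\langle P,Q\rangle_0\neq 0$ if and only if there exists $n\in\mathbb{N}$ such that $P=Q=\bullet^n$, where $\bullet^n$ is the plane poset with $n$ elements, no two of them $\leq_h$-comparable. Consequently, the kernel of the pairing $\langle-,-\rangle_0$ is the subspace spanned by the plane posets not of the form $\bullet^n$, which is a two-sided ideal of $(\mathcal{H}_{\mathcal{PP}},m)$.
   Context: A plane poset is a finite set with two partial orders $\leq_h,\leq_r$ such that two distinct elements are $\leq_h$-comparable iff they are not $\leq_r$-comparable, considered up to isomorphism; $\mathcal{H}_{\mathcal{PP}}$ is the vector space over a field $K$ with basis these classes. $PQ$ (product $m$) is the plane poset on $P\sqcup Q$ with $P,Q$ plane subposets, no $\leq_h$-comparability between $P$ and $Q$, and $x<_r y$ for $x\in P,y\in Q$. A biideal of $P$ is a subset $I$ with $x\in I$ and ($x\leq_h y$ or $x\leq_r y$) implying $y\in I$. $\Delta_0(P)=\sum_{I\text{ biideal of }P}0^{h(P\setminus I,I)}(P\setminus I)\otimes I$ where $h(A,B)=\sharp\{(x,y)\in A\times B\mid x<_h y\}$ and $0^0=1$. On a plane poset, $x\leq y$ iff ($x\leq_h y$ or $x\leq_r y$) is a total order (known fact); for $P,Q$ of equal cardinality $\theta_{P,Q}$ is the increasing bijection $P\to Q$, and $P\leq Q$ means: $\theta_{P,Q}(x)\leq_h\theta_{P,Q}(y)$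 in $Q$ implies $x\leq_h y$ in $P$. $\iota(P)=(P,\leq_r,\leq_h)$. $\langle P,Q\rangle_0=0^{\phi(P,Q)}$ (with $0^0=1$) if $\iota(P)\leq Q$ and $0$ otherwise, where $\phi(P,Q)=\sharp\{(x,y)\in P^2\mid x<_r y,\ \theta_{P,Q}(x)<_h\theta_{P,Q}(y)\}+\sharp\{(x,y)\in P^2\mid x<_h y,\ \theta_{P,Q}(x)<_r\theta_{P,Q}(y)\}$. *)

(* Defs.v *)
From HB Require Import structures.
From mathcomp Require Import all_boot all_order all_algebra.
Set Implicit Arguments. Unset Strict Implicit. Unset Printing Implicit Defensive.
Import GRing.Theory.

Record pdata := PData { car : finType; hle : rel car; rle : rel car }.
Arguments hle : clear implicits.
Arguments rle : clear implicits.

Definition partial_order (T : Type) (R : rel T) : Prop :=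
  [/\ reflexive R, antisymmetric R & transitive R].

Definition plane (P : pdata) : Prop :=
  [/\ partial_order (hle P), partial_order (rle P) &
      forall x y : car P, x != y ->
        (hle P x y || hle P y x) = ~~ (rle P x y || rle P y x)].

(* Isomorphism of plane posets (a bijection preserving and reflecting both
   orders); on finite types, injective + equal cardinality = bijective. *)
Definition pp_iso (P Q : pdata) : bool :=
  [exists f : {ffun car P -> car Q},
     [&& injectiveb f, #|car P| == #|car Q| &
        [forall x, forall y, (hle Q (f x) (f y) == hle P x y)
                          && (rle Q (f x) (f y) == rle P x y)]]].

Definition pprod (P Q : pdata) : pdata :=
  @PData (car P + car Q)%type
    (fun a b => match a, b with
                | inl x, inl y => hle P x y
                | inr x, inr y => hle Q x y
                | _, _ => false end)
    (fun a b => match a, b with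
                | inl x, inl y => rle P x y
                | inr x, inr y => rle Q x y
                | inl _, inr _ => true
                | inr _, inl _ => false end).

Definition psub (P : pdata) (S : {set car P}) : pdata :=
  @PData {x : car P | x \in S}
    (fun x y => hle P (val x) (val y)) (fun x y => rle P (val x) (val y)).

Definition biideal (P : pdata) (I : {set car P}) : bool :=
  [forall x, forall y, (x \in I) && (hle P x y || rle P x y) ==> (y \in I)].

Definition hcount (P : pdata) (A B : {set car P}) : nat :=
  #|[set xy : car P * car P |
      [&& xy.1 \in A, xy.2 \in B, xy.1 != xy.2 & hle P xy.1 xy.2]]|.

(* Coefficient of the basis tensor [A] (x) [B] in
   Delta_0(P) = sum_{I biideal} 0^{h(P\I,I)} (P\I) (x) I. *)
Definition Delta0_coef (K : fieldType) (P A B : pdata) : K :=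
  \sum_(I : {set car P} |
          [&& biideal I, pp_iso (psub (~: I)) A & pp_iso (psub I) B])
     ((0 : K) ^+ hcount (~: I) I)%R.

Definition tle (P : pdata) : rel (car P) := fun x y => hle P x y || rle P x y.
Arguments tle : clear implicits.

Definition incr_bij (P Q : pdata) (f : {ffun car P -> car Q}) : bool :=
  [&& injectiveb f, #|car P| == #|car Q| &
     [forall x, forall y, tle P x y == tle Q (f (x : car P)) (f y)]].

Definition theta (P Q : pdata) : option {ffun car P -> car Q} :=
  [pick f : {ffun car P -> car Q} | incr_bij f].

(* iota(P) <= Q along f: f x <=_h f y in Q implies x <=_h y in iota(P),
   i.e. x <=_r y in P.  (iota(P) has the same total order as P, so
   theta_{iota(P),Q} = theta_{P,Q}.) *)
Definition iota_le (P Q : pdata) (f : {ffun car P -> car Q}) : bool :=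
  [forall x, forall y, hle Q (f x) (f y) ==> rle P x y].

Definition phi (P Q : pdata) (f : {ffun car P -> car Q}) : nat :=
  #|[set xy : car P * car P |
      [&& xy.1 != xy.2, rle P xy.1 xy.2, f xy.1 != f xy.2 & hle Q (f xy.1) (f xy.2)]]|
  + #|[set xy : car P * car P |
      [&& xy.1 != xy.2, hle P xy.1 xy.2, f xy.1 != f xy.2 & rle Q (f xy.1) (f xy.2)]]|.

Definition pair0 (K : fieldType) (P Q : pdata) : K :=
  match theta P Q with
  | Some f => if iota_le f then ((0 : K) ^+ phi f)%R else 0%R
  | None => 0%R
  end.

(* bullet^n : n elements, no two distinct ones <=_h-comparable
   (so <=_r is a total order, here the natural one). *)
Definition dots (n : nat) : pdata :=
  @PData 'I_n (fun x y => x == y) (fun x y => (x <= y)%N).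

Fixpoint all_plane (K : Type) (s : seq (K * pdata)) : Prop :=
  match s with
  | [::] => True
  | cp :: s' => plane cp.2 /\ all_plane s'
  end.

(* Main.v *)
Require Import Defs.
From HB Require Import structures.
From mathcomp Require Import all_boot all_order all_algebra.
Import GRing.Theory.
Set Implicit Arguments. Unset Strict Implicit.

Definition isoP (P Q : pdata) : Prop :=
  exists f : car P -> car Q, [/\ bijective f,
    forall x y, hle Q (f x) (f y) = hle P x y &
    forall x y, rle Q (f x) (f y) = rle P x y].

Lemma inj_surj_bij (T T' : finType) (f : T -> T') :
  injective f -> (forall y, exists x, f x = y) -> bijective f.
Proof.
move=> fi fs; apply: inj_card_bij fi _.
apply: leq_trans (leq_image_card f T).
apply: subset_leq_card; apply/subsetP=> y _; have [x <-] := fs y.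
exact: image_f.
Qed.

Lemma pp_isoE (P Q : pdata) : pp_iso P Q <-> isoP P Q.
Proof.
split.
- case/existsP=> f /and3P[/injectiveP fi /eqP ce /forallP H].
  have fb : bijective f by apply: inj_card_bij fi _; rewrite ce.
  exists f; split=> // x y; have /forallP/(_ y)/andP[/eqP ? /eqP ?] := H x; done.
- move=> [f [fb Hh Hr]]; apply/existsP; exists [ffun x => f x]; apply/and3P; split.
  + apply/injectiveP=> x y; rewrite !ffunE; exact: (bij_inj fb).
  + apply/eqP; exact: bij_eq_card fb.
  + apply/forallP=> x; apply/forallP=> y; rewrite !ffunE Hh Hr !eqxx //.
Qed.

Lemma iso_sym P Q : isoP P Q -> isoP Q P.
Proof.
move=> [f [fb Hh Hr]]; case: (fb) => g fg gf.
exists g; split.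
- by exists f.
- by move=> x y; rewrite -Hh !gf.
- by move=> x y; rewrite -Hr !gf.
Qed.

Lemma iso_trans P Q R : isoP P Q -> isoP Q R -> isoP P R.
Proof.
move=> [f [fb Hh Hr]] [g [gb Gh Gr]]; exists (g \o f); split.
- exact: bij_comp.
- by move=> x y /=; rewrite Gh Hh.
- by move=> x y /=; rewrite Gr Hr.
Qed.

Lemma biidealP (P : pdata) (I : {set car P}) : biideal I ->
  forall x y, x \in I -> hle P x y || rle P x y -> y \in I.
Proof.
move=> /forallP H x y xI hr; have /forallP/(_ y)/implyP := H x; apply.
by rewrite xI hr.
Qed.

Lemma fwd P A B : pp_iso (pprod A B) P -> exists I : {set car P},
  [/\ biideal I, pp_iso (psub (~: I)) A, pp_iso (psub I) B & hcount (~: I) I = 0].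
Proof.
move/pp_isoE=> [f [fb Hh Hr]].
case: (fb) => g fg gf.
pose I := [set x : car P | if g x is inr _ then true else false].
have Hh' : forall x y, hle P x y = hle (pprod A B) (g x) (g y)
  by move=> x y; rewrite -Hh !gf.
have Hr' : forall x y, rle P x y = rle (pprod A B) (g x) (g y)
  by move=> x y; rewrite -Hr !gf.
exists I; split.
- apply/forallP=> x; apply/forallP=> y; apply/implyP=> /andP[]; rewrite !inE Hh' Hr'.
  by case: (g x) => // b; case: (g y).
- apply/pp_isoE; apply: iso_sym.
  have mem : forall a, f (inl a) \in ~: I by move=> a; rewrite !inE fg.
  exists (fun a => (exist (fun x => x \in ~: I) _ (mem a) : car (psub (~: I)))); split.
  + apply: inj_surj_bij.
    * by move=> a a' /(congr1 val) /= /(can_inj fg) [].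
    * move=> [x Hx]; have H0 := Hx; rewrite !inE in H0; case E: (g x) H0 => [a|b] // _.
      by exists a; apply: val_inj => /=; rewrite -E gf.
  + by move=> a a'; rewrite /= Hh.
  + by move=> a a'; rewrite /= Hr.
- apply/pp_isoE; apply: iso_sym.
  have mem : forall a, f (inr a) \in I by move=> a; rewrite !inE fg.
  exists (fun a => (exist (fun x => x \in I) _ (mem a) : car (psub I))); split.
  + apply: inj_surj_bij.
    * by move=> a a' /(congr1 val) /= /(can_inj fg) [].
    * move=> [x Hx]; have H0 := Hx; rewrite !inE in H0; case E: (g x) H0 => [a|b] // _.
      by exists b; apply: val_inj => /=; rewrite -E gf.
  + by move=> a a'; rewrite /= Hh.
  + by move=> a a'; rewrite /= Hr.
- rewrite /hcount; apply/eqP; rewrite cards_eq0; apply/eqP/setP=> [[x y]].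
  rewrite !inE /= Hh'.
  by case: (g x) => a; case: (g y) => b; rewrite ?andbF.
Qed.
Lemma plane_tot (P : pdata) : plane P -> forall x y : car P, x != y ->
  hle P x y || hle P y x || rle P x y || rle P y x.
Proof.
move=> [_ _ Hc] x y nxy; have := Hc x y nxy.
by case: (hle P x y); case: (hle P y x); case: (rle P x y); case: (rle P y x).
Qed.

Lemma cross (P : pdata) (I : {set car P}) : plane P -> biideal I ->
  hcount (~: I) I = 0 -> forall x y, x \notin I -> y \in I ->
  [/\ hle P x y = false, rle P x y = true, hle P y x = false & rle P y x = false].
Proof.
move=> pP bI hc x y xI yI.
have nxy : x != y by apply: contraNneq xI => ->.
have h1 : hle P x y = false.
  apply/negbTE/negP=> hxy; move/eqP: hc; rewrite cards_eq0 => /eqP/setP/(_ (x, y)).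
  by rewrite !inE /= xI yI nxy hxy.
have h2 : hle P y x = false.
  by apply/negbTE/negP=> hyx; move: xI; rewrite (biidealP bI yI) // hyx.
have h3 : rle P y x = false.
  by apply/negbTE/negP=> hyx; move: xI; rewrite (biidealP bI yI) // hyx orbT.
split=> //; have := plane_tot pP nxy; rewrite h1 h2 h3.
by case: (rle P x y).
Qed.

Lemma bwd (P A B : pdata) (I : {set car P}) : plane P -> biideal I ->
  pp_iso (psub (~: I)) A -> pp_iso (psub I) B -> hcount (~: I) I = 0 ->
  pp_iso (pprod A B) P.
Proof.
move=> pP bI /pp_isoE/iso_sym [g [gb Gh Gr]] /pp_isoE/iso_sym [h [hb Hh Hr]] hc.
have CR := cross pP bI hc.
apply/pp_isoE.
exists (fun z => match z with inl a => val (g a) | inr b => val (h b) end); split.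
- apply: inj_surj_bij.
  + move=> [a|b] [a'|b'] /= E.
    * by congr inl; apply: (bij_inj gb); apply: val_inj.
    * by have := valP (g a); rewrite /= E inE (valP (h b')).
    * by have := valP (g a'); rewrite /= -E inE (valP (h b)).
    * by congr inr; apply: (bij_inj hb); apply: val_inj.
  + move=> y; case: (boolP (y \in I)) => Hy.
    * case: (hb) => h' hh' h'h; exists (inr (h' (exist (fun x => x \in I) y Hy))).
      by rewrite /= h'h.
    * have Hy' : y \in ~: I by rewrite inE.
      case: (gb) => g' gg' g'g; exists (inl (g' (exist (fun x => x \in ~: I) y Hy'))).
      by rewrite /= g'g.
- move=> [a|b] [a'|b'] /=.
  + exact: Gh.
  + have := valP (g a); rewrite inE => ga.
    by case: (CR _ _ ga (valP (h b'))).
  + have := valP (g a'); rewrite inE => ga.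
    by case: (CR _ _ ga (valP (h b))).
  + exact: Hh.
- move=> [a|b] [a'|b'] /=.
  + exact: Gr.
  + have := valP (g a); rewrite inE => ga.
    by case: (CR _ _ ga (valP (h b'))).
  + have := valP (g a'); rewrite inE => ga.
    by case: (CR _ _ ga (valP (h b))).
  + exact: Hr.
Qed.

Lemma biideal_uniq (P : pdata) (I J : {set car P}) : plane P -> biideal I -> biideal J ->
  #|I| = #|J| -> I = J.
Proof.
move=> pP bI bJ cIJ.
case: (boolP (I \subset J)) => sIJ.
  by apply/eqP; rewrite eqEcard sIJ cIJ leqnn.
have [x xI xJ] := subsetPn sIJ.
suff sJI : J \subset I by apply/esym/eqP; rewrite eqEcard sJI cIJ leqnn.
apply/subsetP=> y yJ; apply/negPn/negP=> yI.
have nxy : x != y by apply: contraNneq yI => <-.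
have := plane_tot pP nxy.
case/orP=> [/orP[/orP[h|h]|h]|h].
- by move: yI; rewrite (biidealP bI xI) // h.
- by move: xJ; rewrite (biidealP bJ yJ) // h.
- by move: yI; rewrite (biidealP bI xI) // h orbT.
- by move: xJ; rewrite (biidealP bJ yJ) // h orbT.
Qed.

Lemma card_psub (P : pdata) (S : {set car P}) : #|car (psub S)| = #|S|.
Proof. by rewrite card_sig; apply: eq_card=> x; rewrite inE. Qed.

Lemma iso_card P Q : pp_iso P Q -> #|car P| = #|car Q|.
Proof. by move/pp_isoE=> [f [fb _ _]]; exact: bij_eq_card fb. Qed.

Lemma delta_coef (K : fieldType) P A B : plane P ->
  Delta0_coef K P A B = ((pp_iso (pprod A B) P)%:R)%R.
Proof.
move=> pP; rewrite /Delta0_coef.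
have uniqI : forall I J : {set car P},
    [&& biideal I, pp_iso (psub (~: I)) A & pp_iso (psub I) B] ->
    [&& biideal J, pp_iso (psub (~: J)) A & pp_iso (psub J) B] -> I = J.
  move=> I J /and3P[bI _ iI] /and3P[bJ _ iJ]; apply: biideal_uniq => //.
  by rewrite -!card_psub (iso_card iI) (iso_card iJ).
case: (boolP (pp_iso (pprod A B) P)) => H.
- have [I0 [b0 i1 i2 h0]] := fwd H.
  have p0 : [&& biideal I0, pp_iso (psub (~: I0)) A & pp_iso (psub I0) B]
    by rewrite b0 i1 i2.
  rewrite (bigD1 I0) //= big1 ?addr0; first by rewrite h0 expr0.
  move=> I /andP[pI nI]; rewrite expr0n; case: eqP => h //.
  by move: nI; rewrite (uniqI _ _ pI p0) eqxx.
- rewrite big1 //= => I /and3P[bI i1 i2]; rewrite expr0n; case: eqP => h; last by rewrite mulr0n.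
  by move: H; rewrite (bwd pP bI i1 i2 h).
Qed.
Definition hfreeb (P : pdata) : bool := [forall x, forall y, hle P x y ==> (x == y)].

Lemma hfreeP (P : pdata) : reflect (forall x y, hle P x y -> x = y) (hfreeb P).
Proof.
apply: (iffP forallP) => [H x y hxy|H x].
  by have /forallP/(_ y)/implyP/(_ hxy)/eqP := H x.
by apply/forallP=> y; apply/implyP=> /H ->.
Qed.

Lemma iso_hfree P Q : isoP P Q -> hfreeb Q -> hfreeb P.
Proof.
move=> [f [fb Hh _]] /hfreeP hQ; apply/hfreeP=> x y hxy.
by apply: (bij_inj fb); apply: hQ; rewrite Hh.
Qed.

Lemma dots_plane n : plane (dots n).
Proof.
split.
- split; [by move=> x /= | by move=> x y /= /andP[/eqP -> _] | by move=> x y z /= /eqP -> ].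
- split; [by move=> x /= | | by move=> x y z /=; apply: leq_trans].
  by move=> x y /= /andP[a b]; apply: val_inj; apply/eqP; rewrite eqn_leq a b.
- move=> x y /= nxy; rewrite (negbTE nxy) eq_sym (negbTE nxy) /=.
  by case: (leqP x y) => // /ltnW ->.
Qed.

Lemma dots_hfree n : hfreeb (dots n).
Proof. by apply/hfreeP=> x y /= /eqP. Qed.

Section Rank.
Variable P : pdata.
Hypothesis pP : plane P.
Hypothesis hP : hfreeb P.

Definition rset (x : car P) := [set y | rle P y x & y != x].

Lemma rank_lt x : #|rset x| < #|car P|.
Proof.
rewrite -cardsT; apply: proper_card; apply/properP; split; first exact: subsetT.
by exists x; rewrite ?inE ?eqxx ?andbF.
Qed.

Definition rank x : 'I_#|car P| := Ordinal (rank_lt x).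

Lemma rank_strict x y : x != y -> rle P x y -> rank x < rank y.
Proof.
case: pP => _ [rr ra rt] _ nxy rxy; rewrite /=; apply: proper_card.
apply/properP; split.
  apply/subsetP=> z; rewrite !inE => /andP[rzx nzx]; rewrite (rt _ _ _ rzx rxy) /=.
  apply: contraNneq nzx => ezy; subst z; apply/eqP/ra; rewrite rzx rxy.
  done.
by exists x; rewrite !inE ?eqxx ?andbF // rxy nxy.
Qed.

Lemma rtot x y : x != y -> rle P x y || rle P y x.
Proof.
case: pP => _ _ Hc nxy; have := Hc x y nxy.
have /hfreeP H := hP.
have -> : hle P x y = false by apply/negbTE/negP=> /H E; rewrite E eqxx in nxy.
have -> : hle P y x = false by apply/negbTE/negP=> /H E; rewrite E eqxx in nxy.
by case: (rle P x y || rle P y x).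
Qed.

Lemma rank_inj : injective rank.
Proof.
move=> x y E; apply/eqP/negPn/negP=> nxy.
case/orP: (rtot nxy) => h.
  by have := rank_strict nxy h; rewrite E ltnn.
by rewrite eq_sym in nxy; have := rank_strict nxy h; rewrite E ltnn.
Qed.

Lemma rank_iso : isoP P (dots #|car P|).
Proof.
case: pP => [[hr _ _] [rr _ _] _].
exists rank; split.
- by apply: inj_card_bij rank_inj _; rewrite card_ord.
- move=> x y /=; rewrite (inj_eq rank_inj).
  case: eqP => [->|nxy]; first by rewrite hr.
  by apply/esym/negbTE/negP=> /(hfreeP _ hP).
- move=> x y /=; case: (boolP (rle P x y)) => rxy.
    case: (eqVneq x y) => [->|nxy]; first exact: leqnn.
    exact: ltnW (rank_strict nxy rxy).
  case: (eqVneq x y) => [E|nxy]; first by rewrite E rr in rxy.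
  have ryx : rle P y x by move: (rtot nxy); rewrite (negbTE rxy).
  rewrite eq_sym in nxy; by rewrite leqNgt (rank_strict nxy ryx).
Qed.
End Rank.

Lemma iso_dotsE P n : plane P -> pp_iso P (dots n) = hfreeb P && (#|car P| == n).
Proof.
move=> pP; apply/idP/idP.
- move=> H; rewrite (iso_card H) card_ord eqxx andbT.
  apply: (iso_hfree (proj1 (pp_isoE _ _) H)); exact: dots_hfree.
- by case/andP=> hP /eqP <-; apply/pp_isoE; exact: rank_iso.
Qed.
Lemma iso_incr P Q : isoP P Q -> exists f, @incr_bij P Q f.
Proof.
move=> [f [fb Hh Hr]]; exists [ffun x => f x]; apply/and3P; split.
- apply/injectiveP=> x y; rewrite !ffunE; exact: (bij_inj fb).
- apply/eqP; exact: bij_eq_card fb.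
- by apply/forallP=> x; apply/forallP=> y; rewrite !ffunE /tle Hh Hr.
Qed.

Lemma pair0E (K : fieldType) P Q : plane P -> plane Q ->
  pair0 K P Q = (((hfreeb P && hfreeb Q) && (#|car P| == #|car Q|))%:R)%R.
Proof.
move=> pP pQ; rewrite /pair0 /theta; case: pickP => [f|] Hf.
- move: (Hf) => /and3P[/injectiveP fi /eqP ce /forallP tf].
  rewrite ce eqxx andbT.
  have fb : bijective f by apply: inj_card_bij fi _; rewrite ce.
  case: pP => [[hPr _ _] [rPr _ _] HcP].
  case: (boolP (hfreeb P && hfreeb Q)) => [/andP[/hfreeP hP /hfreeP hQ]|nh].
  + have -> : iota_le f.
      apply/forallP=> x; apply/forallP=> y; apply/implyP=> H; rewrite (fi _ _ (hQ _ _ H)); exact: rPr.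
    suff -> : phi f = 0%N by rewrite expr0.
    rewrite /phi; apply/eqP; rewrite addn_eq0 !cards_eq0; apply/andP; split;
      apply/eqP/setP=> [[x y]]; rewrite !inE /=.
    * by case: eqP => //= _; case H: (hle Q (f x) (f y)); rewrite ?andbF // (hQ _ _ H) eqxx !andbF.
    * case: eqP => //= nxy; case H: (hle P x y); rewrite ?andbF //=.
      by case: nxy; rewrite (hP _ _ H).
  + case: ifP => // il; rewrite expr0n; case: eqP => // ph0.
    exfalso; move/negP: nh; apply; move/eqP: ph0; rewrite addn_eq0 !cards_eq0.
    case/andP=> /eqP/setP E1 /eqP/setP E2.
    have Hil := forallP il.
    apply/andP; split; apply/hfreeP.
    * move=> x y hxy; apply/eqP/negPn/negP=> nxy.
      have fnxy : f x != f y by apply: contra nxy => /eqP/fi ->.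
      have := tf x; move/forallP/(_ y); rewrite /tle hxy /= => /eqP/esym/orP[h|h].
      - have := forallP (Hil x) y; rewrite h /= => rxy.
        by move: (HcP x y nxy); rewrite hxy rxy.
      - by have := E2 (x, y); rewrite !inE /= nxy hxy fnxy h.
    * move=> u v huv; apply/eqP/negPn/negP=> nuv.
      case: (fb) => g fg gf.
      have := forallP (Hil (g u)) (g v); rewrite !gf huv /= => ruv.
      have ng : g u != g v by apply: contra nuv => /eqP/(can_inj gf) ->.
      by have := E1 (g u, g v); rewrite !inE /= ng ruv !gf nuv huv.
- case: (boolP ((hfreeb P && hfreeb Q) && (#|car P| == #|car Q|))) => // /andP[/andP[hP hQ] /eqP ce].
  have i1 := rank_iso pP hP; have i2 := iso_sym (rank_iso pQ hQ).
  rewrite ce in i1.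
  have [f Hf'] := iso_incr (iso_trans i1 i2).
  by have := Hf f; rewrite Hf'.
Qed.
Lemma sum_pair (K : fieldType) (s : seq (K * pdata)) Q : all_plane s -> plane Q ->
  (\sum_(cp <- s) cp.1 * pair0 K cp.2 Q = \sum_(cp <- s) cp.1 * pair0 K Q cp.2)%R /\
  (\sum_(cp <- s) cp.1 * pair0 K cp.2 Q =
   if hfreeb Q then \sum_(cp <- s | pp_iso cp.2 (dots #|car Q|)) cp.1 else 0)%R.
Proof.
move=> + pQ; elim: s => [|[c P] s IH] /=.
  by rewrite !big_nil; case: ifP.
move=> [pP /IH [IH1 IH2]]; rewrite !big_cons /= IH1; split.
  by rewrite !pair0E // [hfreeb Q && _]andbC [#|car Q| == _]eq_sym.
rewrite -IH1 IH2 pair0E // iso_dotsE //.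
by case: (hfreeb Q); case: (hfreeb P); case: (_ == _); rewrite /= ?mulr1 ?mulr0 ?add0r ?addr0.
Qed.

Local Open Scope ring_scope.

Theorem proposition25 (K : fieldType) :
  (forall P A B : pdata, plane P -> plane A -> plane B ->
     Delta0_coef K P A B = (pp_iso (pprod A B) P)%:R)
  /\
  (forall P Q : pdata, plane P -> plane Q ->
     (pair0 K P Q != 0 <-> exists n, pp_iso P (dots n) && pp_iso Q (dots n)))
  /\
  (forall s : seq (K * pdata), all_plane s ->
     ((forall Q : pdata, plane Q ->
         \sum_(cp <- s) cp.1 * pair0 K cp.2 Q = 0)
       <-> (forall n, \sum_(cp <- s | pp_iso cp.2 (dots n)) cp.1 = 0))
     /\
     ((forall Q : pdata, plane Q ->
         \sum_(cp <- s) cp.1 * pair0 K Q cp.2 = 0)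
       <-> (forall n, \sum_(cp <- s | pp_iso cp.2 (dots n)) cp.1 = 0)))
  /\
  (forall P Q : pdata, plane P -> plane Q ->
     (forall n, ~~ pp_iso P (dots n)) ->
     (forall n, ~~ pp_iso (pprod P Q) (dots n)) /\
     (forall n, ~~ pp_iso (pprod Q P) (dots n))).
Proof.
split; first by move=> P A B pP _ _; exact: delta_coef.
split.
  move=> P Q pP pQ; rewrite pair0E //; split.
    case: ((hfreeb P && hfreeb Q) && (#|car P| == #|car Q|)) /idP => [/andP[/andP[hP hQ] /eqP ce] _|_].
      by exists #|car P|; rewrite !iso_dotsE // hP hQ ce eqxx.
    by rewrite eqxx.
  move=> [n /andP[]]; rewrite !iso_dotsE // => /andP[hP /eqP e1] /andP[hQ /eqP e2].
  by rewrite hP hQ e1 e2 eqxx oner_eq0.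
split.
  move=> s ps.
  have key : (forall Q : pdata, plane Q ->
         \sum_(cp <- s) cp.1 * pair0 K cp.2 Q = 0)
       <-> (forall n, \sum_(cp <- s | pp_iso cp.2 (dots n)) cp.1 = 0).
    split.
      move=> H n; have := H _ (dots_plane n); case: (sum_pair ps (dots_plane n)) => _ ->.
      by rewrite dots_hfree card_ord.
    move=> H Q pQ; case: (sum_pair ps pQ) => _ ->; case: ifP => //.
  split => //; split=> H.
    by apply: (proj1 key) => Q pQ; have [E _] := sum_pair ps pQ; rewrite E; apply: H.
  by move=> Q pQ; have [E _] := sum_pair ps pQ; rewrite -E; apply: (proj2 key).
move=> P Q pP pQ nP.
have : ~~ hfreeb P.
  apply/negP=> hP; have := nP #|car P|; rewrite iso_dotsE // hP eqxx //.
rewrite /hfreeb negb_forall => /existsP [x]; rewrite negb_forall => /existsP [y].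
rewrite negb_imply => /andP[hxy nxy].
split=> n; apply/negP => /pp_isoE/iso_hfree/(_ (dots_hfree n)) /hfreeP H.
  by have := H (inl x) (inl y) hxy; case=> E; rewrite E eqxx in nxy.
by have := H (inr x) (inr y) hxy; case=> E; rewrite E eqxx in nxy.
Qed.
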